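(* In the setting described in the context, if either ($0<v_0<1$ and $\omega_0<-\frac{\nu}{2}f_\infty(v_0)$) or ($v_0>1$ and $\omega_0>-\frac{\nu}{2}f_\infty(v_0)$), then type B blowup occurs.
   Context: Fix $\nu>0$, $v_0>0$ with $v_0\neq1$, and $\omega_0\in\mathbb{R}$. Consider the real ODE system $\frac{d\omega_{-2,i}}{dt}=\omega_{-2,i}^2\frac{1-2v_c^2+5v_c^4}{4v_c^2(1-v_c^2)^2}-\nu\omega_{-2,i}$, $\frac{dv_c}{dt}=-\omega_{-2,i}\frac{1+v_c^2}{4v_c(1-v_c^2)}$ with $v_c(0)=v_0$, $\omega_{-2,i}(0)=\omega_0$; its solution (continued through $v_c=1$) is characterized as follows. Let $F(v)=\frac{v(v^2-1)}{(v^2+1)^2}+\arctan v$, which is a strictly increasing bijection from $(0,\infty)$ onto $(0,\pi/2)$, and let $G(t)=F(v_0)+\frac{2\omega_0 v_0(1-e^{-\nu t})}{\nu(v_0^2-1)(v_0^2+1)^2}$. Then $v_c(t)$ is defined by $F(v_c(t))=G(t)$ for as long as $G(t)\in(0,\pi/2)$, and $\omega_{-2,i}(t)=\omega_0e^{-\nu t}\frac{v_0}{v_c(t)}\frac{v_c(t)^2-1}{v_0^2-1}\left(\frac{v_c(t)^2+1}{v_0^2+1}\right)^2$. Type A blowup means: there is a finite $t_c>0$ with $v_c(t)>0$ on $[0,t_c)$ and $v_c(t)\to0^+$ as $t\to t_c^-$. Type B blowup means: there is a finite $t_c>0$ with $v_c(t)\in(0,\infty)$ on $[0,t_c)$ and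 $v_c(t)\to+\infty$ as $t\to t_c^-$. Here $f_0(x)=(x^2-1)^2+\frac{(x^2+1)^2}{x}(x^2-1)\arctan(x)$ and $f_\infty(x)=(x^2-1)^2+\frac{(x^2+1)^2}{x}(x^2-1)\left(\arctan(x)-\frac{\pi}{2}\right)$ for $x>0$. *)

(* Defs.v *)
From Stdlib Require Import Reals Lra.
From Coquelicot Require Import Coquelicot.
Open Scope R_scope.

Definition Fv (v : R) : R :=
  v * (v ^ 2 - 1) / (v ^ 2 + 1) ^ 2 + atan v.

Definition Gt (nu v0 w0 t : R) : R :=
  Fv v0 + 2 * w0 * v0 * (1 - exp (- nu * t))
          / (nu * (v0 ^ 2 - 1) * (v0 ^ 2 + 1) ^ 2).

Definition f_inf (x : R) : R :=
  (x ^ 2 - 1) ^ 2 + (x ^ 2 + 1) ^ 2 / x * (x ^ 2 - 1) * (atan x - PI / 2).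

Definition is_vc (nu v0 w0 : R) (vc : R -> R) : Prop :=
  forall t, 0 <= t -> 0 < Gt nu v0 w0 t < PI / 2 ->
    0 < vc t /\ Fv (vc t) = Gt nu v0 w0 t.

(* Type B blowup: finite tc > 0, v_c(t) in (0,oo) (i.e. defined) on [0,tc),
   and v_c(t) -> +oo as t -> tc^- . *)
Definition typeB_blowup (nu v0 w0 : R) (vc : R -> R) : Prop :=
  exists tc, 0 < tc /\
    (forall t, 0 <= t < tc -> 0 < Gt nu v0 w0 t < PI / 2 /\ 0 < vc t) /\
    filterlim vc (at_left tc) (Rbar_locally p_infty).

(* Main.v *)
Require Import Defs.
From Stdlib Require Import Reals Lra.
From Coquelicot Require Import Coquelicot.
Open Scope R_scope.

Lemma Fv_deriv x : is_derive Fv x (8*x^2/(x^2+1)^3).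
Proof.
  unfold Fv.
  assert (H1 : is_derive (fun v => v * (v ^ 2 - 1) / (v ^ 2 + 1) ^ 2) x
     ((-x^4+6*x^2-1)/(x^2+1)^3)).
  { auto_derive. nra. field. nra. }
  assert (H2 := is_derive_atan x).
  replace (8*x^2/(x^2+1)^3) with ((-x^4+6*x^2-1)/(x^2+1)^3 + / (1 + x²)).
  apply (is_derive_plus _ _ x _ _ H1 H2).
  unfold Rsqr. field. nra.
Qed.

Lemma dF_nonneg x : 0 <= 8*x^2/(x^2+1)^3.
Proof.
  apply Rmult_le_pos. nra. apply Rlt_le, Rinv_0_lt_compat.
  apply pow_lt. nra.
Qed.

Lemma dF_pos x : 0 < x -> 0 < 8*x^2/(x^2+1)^3.
Proof.
  intros. apply Rmult_lt_0_compat. nra. apply Rinv_0_lt_compat.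
  apply pow_lt. nra.
Qed.

Lemma Fv0 : Fv 0 = 0.
Proof. unfold Fv. rewrite atan_0. field. Qed.

Lemma Fv_nonneg v : 0 <= v -> 0 <= Fv v.
Proof.
  intros Hv. destruct (Req_dec v 0) as [->|Hn]. rewrite Fv0; lra.
  destruct (MVT_gen Fv 0 v (fun x => 8*x^2/(x^2+1)^3)) as [c [_ Hc]].
  - intros; apply Fv_deriv.
  - intros x _. apply continuity_pt_filterlim.
    apply (ex_derive_continuous Fv x). eexists; apply Fv_deriv.
  - rewrite Fv0 in Hc. assert (H := dF_nonneg c).
    assert (Fv v = 8 * c ^ 2 / (c ^ 2 + 1) ^ 3 * v) by lra. nra.
Qed.

Lemma Fv_incr a b : 0 < a -> a < b -> Fv a < Fv b.
Proof.
  intros Ha Hab.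
  apply (incr_function Fv (Finite 0) p_infty (fun x => 8*x^2/(x^2+1)^3));
    simpl; auto; try lra.
  - intros; apply Fv_deriv.
  - intros; apply dF_pos; auto.
Qed.

Lemma Fv_pos v : 0 < v -> 0 < Fv v.
Proof.
  intros. apply Rlt_le_trans with (Fv (v/2)).
  2: apply Rlt_le, Fv_incr; lra.
  apply Rle_lt_trans with (Fv (v/4)). apply Fv_nonneg; lra.
  apply Fv_incr; lra.
Qed.

Lemma Fv_sym v : 0 < v -> Fv v + Fv (/ v) = PI / 2.
Proof.
  intros. unfold Fv. rewrite atan_inv; auto. field.
  split; [lra|nra].
Qed.

Lemma Fv_lt v : 0 < v -> Fv v < PI / 2.
Proof.
  intros. rewrite <- (Fv_sym v H). assert (0 < Fv (/ v)).
  apply Fv_pos, Rinv_0_lt_compat; auto. lra.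
Qed.

Lemma Fv_inv a b : 0 < a -> 0 < b -> Fv b < Fv a -> b < a.
Proof.
  intros Ha Hb H. destruct (Rlt_le_dec b a); auto.
  destruct (Req_dec a b) as [->|]. lra.
  assert (Fv a < Fv b) by (apply Fv_incr; lra). lra.
Qed.

Theorem lemma3p6 (nu v0 w0 : R) (vc : R -> R) :
  0 < nu -> 0 < v0 -> v0 <> 1 ->
  is_vc nu v0 w0 vc ->
  ((0 < v0 < 1 /\ w0 < - (nu / 2) * f_inf v0) \/
   (1 < v0 /\ w0 > - (nu / 2) * f_inf v0)) ->
  typeB_blowup nu v0 w0 vc.
Proof.
  intros Hnu Hv0 Hv1 Hvc Hcase.
  set (F0 := Fv v0).
  set (D := (v0 ^ 2 - 1) * (v0 ^ 2 + 1) ^ 2).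
  assert (HD : D <> 0).
  { unfold D. apply Rmult_integral_contrapositive; split.
    intro. apply Hv1. nra. apply pow_nonzero. nra. }
  set (c := 2 * w0 * v0 / (nu * D)).
  assert (HG : forall t, Gt nu v0 w0 t = F0 + c * (1 - exp (- nu * t))).
  { intros. unfold Gt, c, F0, D. field. split; [nra| split; [intro Hz; apply HD; unfold D; rewrite Hz; ring | lra]]. }
  assert (HF0 : 0 < F0) by (apply Fv_pos; auto).
  assert (HF0' : F0 < PI / 2) by (apply Fv_lt; auto).
  assert (Hfi : v0 * f_inf v0 = D * (F0 - PI / 2)).
  { unfold f_inf, D, F0, Fv. field. split. nra. lra. }
  assert (HcK : c * (nu * D) = 2 * w0 * v0).
  { unfold c. field. split; auto. lra. }
  assert (Hc : c > PI / 2 - F0).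
  { destruct Hcase as [[[_ Hl] Hw] | [Hl Hw]].
    - assert (D < 0).
      { unfold D. assert (Hp : 0 < (v0^2+1)^2) by (apply pow_lt; nra).
        assert (Hn : v0^2 - 1 < 0) by nra.
        assert (H := Rmult_lt_compat_r _ _ _ Hp Hn). lra. }
      assert (2 * w0 * v0 < - (nu * (v0 * f_inf v0))) by nra.
      rewrite Hfi in H0.
      assert (HK : nu * D < 0) by nra.
      clear -HcK H0 HK. set (K := nu * D) in *.
      replace (- (nu * (D * (F0 - PI / 2)))) with (K * (PI/2 - F0)) in H0
        by (unfold K; ring). nra.
    - assert (D > 0).
      { unfold D. assert (Hp : 0 < (v0^2+1)^2) by (apply pow_lt; nra).
        assert (Hn : 0 < v0^2 - 1) by nra.
        assert (H := Rmult_lt_0_compat _ _ Hn Hp). lra. }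
      assert (2 * w0 * v0 > - (nu * (v0 * f_inf v0))) by nra.
      rewrite Hfi in H0.
      assert (HK : nu * D > 0) by nra.
      clear -HcK H0 HK. set (K := nu * D) in *.
      replace (- (nu * (D * (F0 - PI / 2)))) with (K * (PI/2 - F0)) in H0
        by (unfold K; ring). nra. }
  set (r := (PI / 2 - F0) / c).
  assert (Hr0 : 0 < r).
  { unfold r. apply Rdiv_lt_0_compat; lra. }
  assert (Hr1 : r < 1).
  { unfold r. apply (Rmult_lt_reg_r c). lra.
    unfold Rdiv. rewrite Rmult_assoc, Rinv_l; lra. }
  assert (Hrc : c * r = PI / 2 - F0).
  { unfold r. field. lra. }
  set (tc := - ln (1 - r) / nu).
  assert (Hln : ln (1 - r) < 0).
  { rewrite <- ln_1. apply ln_increasing; lra. }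
  assert (Htc : 0 < tc).
  { unfold tc. apply Rdiv_lt_0_compat; lra. }
  assert (Hetc : exp (- nu * tc) = 1 - r).
  { unfold tc. replace (- nu * (- ln (1 - r) / nu)) with (ln (1 - r))
      by (field; lra). apply exp_ln; lra. }
  assert (HGt : forall t, 0 <= t < tc -> 0 < Gt nu v0 w0 t < PI / 2).
  { intros t Ht. rewrite HG.
    assert (exp (- nu * t) <= 1).
    { destruct (Req_dec t 0) as [->|].
      replace (- nu * 0) with 0 by ring. rewrite exp_0; lra.
      rewrite <- exp_0. apply Rlt_le, exp_increasing. nra. }
    assert (exp (- nu * tc) < exp (- nu * t)).
    { apply exp_increasing. nra. }
    split; nra. }
  exists tc. split; [auto|split].
  - intros t Ht. split. apply HGt; auto.
    apply (Hvc t); [lra| apply HGt; auto].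
  - intros P [M HM].
    set (M' := Rmax M 1).
    assert (HM' : 0 < M') by (unfold M'; apply Rlt_le_trans with 1;
                               [lra|apply Rmax_r]).
    set (T := Rmax (Fv M') F0).
    assert (HT : T < PI / 2).
    { unfold T. apply Rmax_lub_lt; auto. apply Fv_lt; auto. }
    assert (HTF : F0 <= T) by apply Rmax_r.
    set (s := 1 - (T - F0) / c).
    assert (Hcs : c * (1 - s) = T - F0).
    { unfold s. field. lra. }
    assert (Hs : 1 - r < s).
    { assert (c * (1 - s) < c * r) by lra. nra. }
    assert (Hs0 : 0 < s) by lra.
    set (t1 := Rmax 0 (- ln s / nu)).
    assert (Ht1 : t1 < tc).
    { unfold t1. apply Rmax_lub_lt; auto. unfold tc.
      unfold Rdiv. apply Rmult_lt_compat_r. apply Rinv_0_lt_compat; lra.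
      assert (ln (1 - r) < ln s) by (apply ln_increasing; lra). lra. }
    assert (Ht10 : 0 <= t1) by apply Rmax_l.
    assert (Hd : 0 < tc - t1) by lra.
    exists (mkposreal _ Hd). intros y Hy Hyt. change R in y.
    change (Rabs (y - tc) < tc - t1) in Hy.
    apply Rabs_def2 in Hy. destruct Hy as [_ Hy].
    assert (Hyt1 : t1 < y) by lra.
    assert (Hy0 : 0 <= y < tc) by lra.
    destruct (Hvc y (proj1 Hy0) (HGt y Hy0)) as [Hpos Heq].
    assert (Hexp : exp (- nu * y) < s).
    { rewrite <- (exp_ln s Hs0). apply exp_increasing.
      assert (- ln s / nu <= t1) by apply Rmax_r.
      assert (- ln s / nu < y) by lra.
      assert (- ln s < nu * y).
      { apply (Rmult_lt_reg_r (/ nu)). apply Rinv_0_lt_compat; lra.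
        replace (nu * y * / nu) with y by (field; lra). exact H0. }
      lra. }
    assert (HGy : T < Gt nu v0 w0 y).
    { rewrite HG. assert (c > 0) by lra. nra. }
    assert (Fv M' < Fv (vc y)).
    { rewrite Heq. apply Rle_lt_trans with T; auto. apply Rmax_l. }
    apply HM. apply Rle_lt_trans with M'.
    apply Rmax_l. apply Fv_inv; auto.
Qed.
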